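(* For every integer $n \geq 1$, $$\sum_{\pi \vdash n} t(\pi) = \sum_{i \geq 1} S(i)\, p(n-i).$$
   Context: $p(m)$ is the number of partitions of $m$, with $p(0)=1$ and $p(m)=0$ for $m<0$. For a partition $\pi$, $f_i$ denotes the number of times $i$ appears as a part of $\pi$, and $t(\pi)$ is the nonnegative integer such that $f_i$ is odd for all $1 \leq i \leq t(\pi)$ and $f_{t(\pi)+1}$ is even (possibly zero). The rank of a partition is its largest part minus its number of parts. For $i \geq 1$, $S(i)$ is the number of partitions of $i$ into distinct parts with even rank minus the number of partitions of $i$ into distinct parts with odd rank. *)

(* Defs.v *)
From mathcomp Require Import all_boot all_order all_algebra.
Set Implicit Arguments. Unset Strict Implicit. Unset Printing Implicit Defensive.
Import GRing.Theory Num.Theory.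

(* A partition of n is encoded by its frequency function:
   f : {ffun 'I_n -> 'I_n.+1}, where f i is the multiplicity f_{i+1} of the
   part i+1 (parts of a partition of n lie in 1..n, and each multiplicity
   is at most n).  f encodes a partition of n iff sum_k k * f_k = n. *)
Definition fpart (n : nat) := {ffun 'I_n -> 'I_n.+1}.

Definition is_part (n : nat) (f : fpart n) : bool :=
  \sum_(i < n) i.+1 * f i == n.

Definition mult (n : nat) (f : fpart n) (k : nat) : nat :=
  match insub k.-1 with
  | Some i => if k is 0 then 0 else nat_of_ord (f i)
  | None => 0
  end.

Definition npart (m : nat) : nat := #|[pred f : fpart m | is_part f]|.

(* t(pi): the least j with f_{j+1} even, i.e. f_1,...,f_j all odd. Since
   f_{n+1} = 0, the search in 0..n always succeeds. *)
Definition tpart (n : nat) (f : fpart n) : nat :=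
  find (fun j => ~~ odd (mult f j.+1)) (iota 0 n.+1).

Definition num_parts (n : nat) (f : fpart n) : nat := \sum_(i < n) (f i : nat).

Definition largest_part (n : nat) (f : fpart n) : nat :=
  \max_(i < n | (f i : nat) != 0) i.+1.

Definition rank (n : nat) (f : fpart n) : int :=
  (largest_part f)%:Z - (num_parts f)%:Z.

Definition distinct_parts (n : nat) (f : fpart n) : bool :=
  [forall i, (f i : nat) <= 1].

Definition Sdist (i : nat) : int :=
  (#|[pred f : fpart i | is_part f && distinct_parts f && ~~ odd `|rank f|%N]|)%:Z
  - (#|[pred f : fpart i | is_part f && distinct_parts f && odd `|rank f|%N]|)%:Z.

(* Main.v *)
Require Import Defs.
From mathcomp Require Import all_boot all_order all_algebra ring.
Import GRing.Theory Num.Theory.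
Local Open Scope ring_scope.


Definition eqt (N : nat) (p q : {poly int}) := forall i, (i <= N)%N -> p`_i = q`_i.

Lemma eqt_refl N p : eqt N p p. Proof. by []. Qed.
Lemma eqt_sym N p q : eqt N p q -> eqt N q p. Proof. by move=> h i hi; rewrite h. Qed.
Lemma eqt_trans N p q r : eqt N p q -> eqt N q r -> eqt N p r.
Proof. by move=> h1 h2 i hi; rewrite h1 ?h2. Qed.
Lemma eqtD N p q p' q' : eqt N p q -> eqt N p' q' -> eqt N (p + p') (q + q').
Proof. by move=> h1 h2 i hi; rewrite !coefD h1 ?h2. Qed.
Lemma eqtN N p q : eqt N p q -> eqt N (- p) (- q).
Proof. by move=> h1 i hi; rewrite !coefN h1. Qed.
Lemma eqtMr N p q r : eqt N p q -> eqt N (p * r) (q * r).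
Proof.
move=> h i hi; rewrite !coefM; apply: eq_bigr => j _; rewrite h //.
exact: leq_trans (leq_ord j) hi.
Qed.
Lemma eqtMl N p q r : eqt N p q -> eqt N (r * p) (r * q).
Proof. by move=> h; rewrite ![r * _]mulrC; apply: eqtMr. Qed.
Lemma eqtM N p q p' q' : eqt N p q -> eqt N p' q' -> eqt N (p * p') (q * q').
Proof. move=> h1 h2; apply: eqt_trans; [apply: eqtMr h1 | apply: eqtMl h2]. Qed.
Lemma eqt_sum N (I : finType) (P : pred I) (F G : I -> {poly int}) :
  (forall i, P i -> eqt N (F i) (G i)) -> eqt N (\sum_(i | P i) F i) (\sum_(i | P i) G i).
Proof.
move=> h; elim/big_rec2: _ => [|i y1 y2 Pi e]; first exact: eqt_refl.
exact: eqtD (h _ Pi) e.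
Qed.
Lemma eqt_prod N (I : finType) (P : pred I) (F G : I -> {poly int}) :
  (forall i, P i -> eqt N (F i) (G i)) -> eqt N (\prod_(i | P i) F i) (\prod_(i | P i) G i).
Proof.
move=> h; elim/big_rec2: _ => [|i y1 y2 Pi e]; first exact: eqt_refl.
exact: eqtM (h _ Pi) e.
Qed.
Lemma eqt_Xn0 N d p : (N < d)%N -> eqt N ('X^d * p) 0.
Proof. by move=> hd i hi; rewrite coefXnM coef0 (leq_ltn_trans hi hd). Qed.

Lemma eqt_cancel N d u : (0 < d)%N -> eqt N ((1 + 'X^d) * u) 0 -> eqt N u 0.
Proof.
move=> hd h i; elim: i {-2}i (leqnn i) => [|m IH] i hi hN.
  move: (h _ hN); rewrite mulrDl mul1r coefD coefXnM.
  by move: hi; rewrite leqn0 => /eqP ->; rewrite hd addr0 coef0.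
move: (h _ hN); rewrite mulrDl mul1r coefD coefXnM coef0.
case: ltnP => hdi; first by rewrite addr0.
have hlt : (i - d < i)%N by rewrite ltn_subrL hd (leq_trans hd hdi).
have hm : (i - d <= m)%N by rewrite -ltnS (leq_trans hlt hi).
have := IH (i - d)%N hm (leq_trans (leq_subr _ _) hN).
rewrite coef0 => ->; by rewrite addr0.
Qed.


Lemma ringE (R : comPzRingType) (a b : R) : a = b -> a = b. Proof. by []. Qed.
Ltac pring := apply: (@ringE {poly int}); ring.

Fixpoint Fe (n m : nat) : {poly int} :=
  match n, m with
  | 0, 0 => 1
  | 0, _.+1 => 0
  | n'.+1, 0 => 1
  | n'.+1, m'.+1 => Fe n' m'.+1 + 'X^(n'.+1) * Fe n' m'
  end.

Lemma Fe_gt n m : (n < m)%N -> Fe n m = 0.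
Proof.
elim: n m => [|n IH] [|m] //= h.
by rewrite !IH ?mulr0 ?addr0 // ltnW.
Qed.

Lemma Fe_n0 n : Fe n 0 = 1. Proof. by case: n. Qed.

Lemma Fe_alt n m : Fe n.+1 m.+1 = 'X^(m.+1) * (Fe n m.+1 + Fe n m).
Proof.
elim: n m => [|n IH] m.
  case: m => [|m] /=; pring.
have E1 : Fe n.+2 m.+1 = Fe n.+1 m.+1 + 'X^(n.+2) * Fe n.+1 m by [].
have E2 : Fe n.+1 m.+1 = Fe n m.+1 + 'X^(n.+1) * Fe n m by [].
rewrite E1 {1}IH E2.
case: m {E1 E2} => [|m].
  rewrite !Fe_n0 !exprS; pring.
rewrite {1}IH [Fe n.+1 m.+1]/= !exprS; pring.
Qed.

Lemma Fe_sum L B : (L < B)%N ->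
  \sum_(j < B) (-1) ^+ j * Fe L j = \prod_(k < L) (1 - 'X^(k.+1)).
Proof.
elim: L B => [|L IH] [|B] // hLB.
  rewrite big_ord_recl big_ord0 /= big1 ?expr0 ?mulr1 ?addr0 // => i _; exact: mulr0.
have -> : \prod_(k < L.+1) (1 - 'X^(k.+1)) = \prod_(k < L) (1 - 'X^(k.+1)) * (1 - 'X^(L.+1)) :> {poly int}.
  by rewrite big_ord_recr.
rewrite [LHS]big_ord_recl.
have E : forall i : 'I_B, (-1) ^+ (bump 0 i) * Fe L.+1 (bump 0 i)
   = - ((-1) ^+ i * Fe L i.+1) - 'X^(L.+1) * ((-1) ^+ i * Fe L i).
  move=> i; rewrite /bump add1n.
  have -> : Fe L.+1 i.+1 = Fe L i.+1 + 'X^(L.+1) * Fe L i by [].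
  rewrite exprS; pring.
rewrite (eq_bigr _ (fun i _ => E i)) sumrB sumrN -mulr_sumr.
have h1 := IH B hLB.
have h2 := IH B.+1 (ltnW hLB).
rewrite big_ord_recl in h2.
have E2 : forall i : 'I_B, (-1) ^+ (bump 0 i) * Fe L (bump 0 i) = - ((-1) ^+ i * Fe L i.+1).
  move=> i; rewrite /bump add1n exprS; pring.
rewrite (eq_bigr _ (fun i _ => E2 i)) sumrN in h2.
rewrite h1 Fe_n0.
have -> : \sum_(i < B) (-1) ^+ i * Fe L i.+1 = 1 - \prod_(k < L) (1 - 'X^(k.+1)).
  rewrite -h2 Fe_n0 /= expr0; pring.
rewrite expr0; pring.
Qed.

Definition Se (M j : nat) : {poly int} :=
  if j is j'.+1 then \sum_(L < M) (-1) ^+ (L + j') * 'X^(L.+1) * Fe L j' else 1.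

Lemma Se_rec M j : Se M.+1 j.+1 = 'X^(j.+1) * Se M j - 'X^(j.+1) * Se M j.+1.
Proof.
rewrite /Se big_ord_recl.
case: j => [|j].
  rewrite Fe_n0 mulr_sumr -sumrN; congr (_ + _).
    by rewrite /= expr0 mul1r expr1.
  apply: eq_big => // i _.
  rewrite lift0 !addn0 !Fe_n0 !exprS; pring.
have -> : Fe ord0 j.+1 = 0 by [].
rewrite mulr0 add0r mulr_sumr mulr_sumr -sumrB.
apply: eq_big => // i _.
rewrite lift0 Fe_alt !addSn !addnS !exprS; pring.
Qed.

Lemma eqt_subr N p q : eqt N (p - q) 0 -> eqt N p q.
Proof. by move=> h i hi; move: (h i hi); rewrite coefB coef0 => /eqP; rewrite subr_eq0 => /eqP. Qed.
Lemma eqt_subl N p q : eqt N p q -> eqt N (p - q) 0.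
Proof. by move=> h i hi; rewrite coefB coef0 h // subrr. Qed.

Lemma Se_diff M j : exists c, Se M.+1 j - Se M j = 'X^(M.+1) * c.
Proof.
case: j => [|j]; first by exists 0; rewrite /= subrr mulr0.
exists ((-1) ^+ (M + j) * Fe M j); rewrite /Se big_ord_recr /=.
by rewrite addrAC subrr add0r; pring.
Qed.

Lemma Se_step N j : eqt N ((1 + 'X^(j.+1)) * Se N j.+1) ('X^(j.+1) * Se N j).
Proof.
case: N => [|M].
  apply: eqt_trans (_ : eqt 0 _ 0) _.
    by rewrite /Se big_ord0 mulr0; apply: eqt_refl.
  apply: eqt_sym; apply: eqt_Xn0.
  by [].
apply: eqt_subr.
have [c1 e1] := Se_diff M j.
have [c2 e2] := Se_diff M j.+1.
have -> : (1 + 'X^(j.+1)) * Se M.+1 j.+1 - 'X^(j.+1) * Se M.+1 j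
    = 'X^(j.+1) * (Se M.+1 j.+1 - Se M j.+1) - 'X^(j.+1) * (Se M.+1 j - Se M j).
  rewrite [in LHS]mulrDl mul1r [in X in X + _ - _]Se_rec; pring.
rewrite e1 e2 !mulrA -!exprD.
apply: eqt_trans (_ : eqt M.+1 ('X^(j.+1 + M.+1) * (c2 - c1)) 0).
  by rewrite mulrBr; apply: eqt_refl.
by apply: eqt_Xn0; rewrite addSn ltnS leq_addl.
Qed.

Definition Ce (N k : nat) : {poly int} := \sum_(a < N) (-1) ^+ a * 'X^(k.+1 * a.+1).
Definition Rq (N j : nat) : {poly int} := \prod_(k < j) Ce N k.

Lemma geom_alt (R : comPzRingType) (Y : R) N :
  (1 + Y) * \sum_(a < N) (-1) ^+ a * Y ^+ a.+1 = Y - (-1) ^+ N * Y ^+ N.+1.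
Proof.
elim: N => [|N IH]; first by rewrite big_ord0 mulr0 expr0 mul1r expr1 subrr.
rewrite big_ord_recr /= mulrDr IH !exprS; ring.
Qed.

Lemma Ce_step N k : eqt N ((1 + 'X^(k.+1)) * Ce N k) 'X^(k.+1).
Proof.
have -> : Ce N k = \sum_(a < N) (-1) ^+ a * ('X^(k.+1)) ^+ a.+1.
  by apply: eq_bigr => a _; rewrite exprM.
rewrite geom_alt -exprM mulrC.
have h : eqt N ('X^(k.+1 * N.+1) * (-1) ^+ N) 0.
  by apply: eqt_Xn0; rewrite mulSn; exact: (leq_trans (ltnSn N) (leq_addr _ _)).
by move=> i hi; rewrite coefB (h i hi) coef0 subr0.
Qed.

Lemma Se_Re N j : eqt N (Se N j) (Rq N j).
Proof.
elim: j => [|j IH]; first by rewrite /Rq big_ord0; apply: eqt_refl.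
apply: eqt_subr; apply: (@eqt_cancel N j.+1) => //.
rewrite mulrBr.
have -> : (1 + 'X^(j.+1)) * Rq N j.+1 = Rq N j * ((1 + 'X^(j.+1)) * Ce N j).
  by rewrite /Rq big_ord_recr /= mulrCA.
apply: eqt_subl.
apply: eqt_trans (Se_step N j) _.
apply: eqt_trans (_ : eqt N ('X^(j.+1) * Rq N j) _).
  exact: eqtMl.
rewrite mulrC; apply: eqtMl; apply: eqt_sym; exact: Ce_step.
Qed.

Definition De (L : nat) : {poly int} := (-1) ^+ L * 'X^(L.+1) * \prod_(k < L) (1 - 'X^(k.+1)).

Lemma sumSe_De N : \sum_(j < N) Se N j.+1 = \sum_(L < N) De L.
Proof.
rewrite /Se exchange_big /=; apply: eq_bigr => L _.
rewrite /De -(Fe_sum _ _ (ltn_ord L)) mulr_sumr; apply: eq_bigr => j _.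
rewrite exprD; pring.
Qed.

Lemma Re_De N : eqt N (\sum_(j < N) Rq N j.+1) (\sum_(L < N) De L).
Proof.
rewrite -sumSe_De; apply: eqt_sum => j _; apply: eqt_sym; exact: Se_Re.
Qed.


Definition wt n (f : fpart n) : nat := \sum_(i < n) i.+1 * f i.

Lemma prod_form n (w : nat -> nat -> int) :
  \sum_(f : fpart n | is_part f) \prod_(k < n) w k (f k)
  = (\prod_(k < n) \sum_(m < n.+1) (w k m)%:P * 'X^(k.+1 * m))`_n.
Proof.
rewrite (bigA_distr_bigA (fun (k : 'I_n) (m : 'I_n.+1) => (w k m)%:P * 'X^(k.+1 * m))).
rewrite coef_sum big_mkcond /=; apply: eq_bigr => f _.
rewrite big_split /= -rmorph_prod prodrXr coefCM coefXn.
rewrite /is_part eq_sym; case: eqP => _; by rewrite ?mulr1 ?mulr0.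
Qed.

Lemma mult_lt n (f : fpart n) k (hk : (k < n)%N) : mult f k.+1 = f (Ordinal hk).
Proof. by rewrite /mult /= insubT. Qed.

Lemma mult_n n (f : fpart n) : mult f n.+1 = 0%N.
Proof. by rewrite /mult /= insubF // ltnn. Qed.

Lemma find_sum (T : Type) (p : pred T) s : has p s ->
  find p s = (\sum_(j < size s) all (predC p) (take j.+1 s))%N.
Proof.
elim: s => [|x s IH] //= hs.
rewrite big_ord_recl /=.
case: (boolP (p x)) => px /=.
  by rewrite big1.
rewrite (negbTE px) /= in hs; rewrite (IH hs) take0 /= add1n.
by congr _.+1; apply: eq_bigr => i _; rewrite /bump add1n.
Qed.

Lemma prod01 n (b : 'I_n -> bool) :
  \prod_(k < n) (if b k then 1 else 0 : int) = if [forall k, b k] then 1 else 0.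
Proof.
case: forallP => h.
  by apply: big1 => k _; rewrite h.
have [k hk] : exists k, ~~ b k.
  by apply/existsP; rewrite -negb_forall; apply/forallP.
by rewrite (bigD1 k) //= (negbTE hk) mul0r.
Qed.

Lemma tpart_prod n (f : fpart n) :
  (tpart f)%:Z = \sum_(j < n) \prod_(k < n) (if (k <= j)%N ==> odd (f k) then 1 else 0).
Proof.
rewrite /tpart find_sum; last first.
  by apply/hasP; exists n; rewrite ?mem_iota //= mult_n.
rewrite size_iota.
have E : forall F : nat -> nat, (\sum_(j < n.+1) F j = \sum_(j < n) F j + F n)%N.
  by move=> F; rewrite big_ord_recr.
rewrite (E (fun j => all (predC (fun j => ~~ odd (mult f j.+1))) (take j.+1 (iota 0 n.+1)))).
rewrite take_oversize ?size_iota //.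
have -> : all (predC (fun j => ~~ odd (mult f j.+1))) (iota 0 n.+1) = false.
  by apply/negbTE/allPn; exists n; rewrite ?mem_iota //= mult_n.
rewrite addn0 -natz natr_sum; apply: eq_bigr => j _.
rewrite prod01 take_iota (minn_idPl (leqW (ltn_ord j))).
have -> : all (predC (fun j => ~~ odd (mult f j.+1))) (iota 0 j.+1) =
   [forall k : 'I_n, (k <= j)%N ==> odd (f k)].
  apply/allP/forallP.
    move=> h k; apply/implyP => hkj; have := h k; rewrite mem_iota add0n ltnS hkj /= => /(_ isT).
    by rewrite negbK mult_lt /=; congr (odd (f _)); apply: val_inj.
  move=> h k; rewrite mem_iota add0n ltnS => /andP [_ hkj].
  have hk : (k < n)%N := leq_ltn_trans hkj (ltn_ord j).
  have := h (Ordinal hk); rewrite /= hkj /= => o.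
  by rewrite /= negbK mult_lt.
by case: forallP.
Qed.

Definition Ge (N k : nat) : {poly int} := \sum_(a < N.+1) 'X^(k.+1 * a).
Definition Pe (N : nat) : {poly int} := \prod_(k < N) Ge N k.

Lemma coef_Ge N k i : (i <= N)%N -> (Ge N k)`_i = (k.+1 %| i)%:R.
Proof.
move=> hi; rewrite /Ge coef_sum.
under eq_bigr => a _ do rewrite coefXn.
case: dvdnP => [[q hq]|hq].
  rewrite hq in hi *.
  rewrite (eq_bigr (fun a : 'I_N.+1 => if (a == q :> nat) then 1 else 0)); last first.
    by move=> a _; rewrite [(q * _)%N]mulnC eqn_pmul2l // eq_sym; case: eqP.
  rewrite -big_mkcond (big_ord1_eq _ (fun _ => 1)) ltnS.
  by rewrite (leq_trans _ hi) // leq_pmulr.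
rewrite big1 // => a _; case: eqP => // h; case: hq; exists a; by rewrite h mulnC.
Qed.

Lemma eqt_Ge m N k : (m <= N)%N -> eqt m (Ge N k) (if (k < m)%N then Ge m k else 1).
Proof.
move=> hmN i hi; rewrite coef_Ge ?(leq_trans hi) //.
case: ltnP => hk; first by rewrite coef_Ge.
rewrite coefC; case: i hi => [|i] hi; first by rewrite dvdn0.
have : ~~ (k.+1 %| i.+1)%N.
  by apply/negP => /(dvdn_leq (ltn0Sn _)); rewrite ltnS => h; have := leq_ltn_trans h (leq_trans hi hk); rewrite ltnn.
by move/negbTE ->.
Qed.

Lemma npart_Pe m N : (m <= N)%N -> (npart m)%:Z = (Pe N)`_m.
Proof.
move=> hmN.
have -> : (npart m)%:Z = (Pe m)`_m.
  rewrite /npart -sum1_card -natz natr_sum.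
  transitivity (\sum_(f : fpart m | is_part f) \prod_(k < m) (fun _ _ => 1 : int) k (f k)).
    by apply: eq_bigr => f _; rewrite big1.
  rewrite (prod_form m (fun _ _ => 1)) /Pe /Ge polyC1.
  by under eq_bigr => k _ do under eq_bigr => a _ do rewrite mul1r.
have h : eqt m (Pe N) (\prod_(k < N) (if (k < m)%N then Ge m k else 1)).
  by apply: eqt_prod => k _; apply: eqt_Ge.
by rewrite (h m (leqnn m)) -big_mkcond /= -(big_ord_widen _ (fun k => Ge m k) hmN).
Qed.

Lemma geom_odd (R : comPzRingType) (Y : R) N :
  (1 + Y) * \sum_(m < N.+1) (if odd m then 1 else 0) * Y ^+ m
  = Y * \sum_(m < N.+1) Y ^+ m - (if odd N then 0 else Y ^+ N.+1).
Proof.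
elim: N => [|N IH].
  rewrite !big_ord_recr !big_ord0 /=; ring.
rewrite big_ord_recr [in RHS]big_ord_recr /= mulrDr IH.
case: (odd N) => /=; rewrite !exprS; ring.
Qed.

Lemma odd_eqt n k :
  eqt n (\sum_(m < n.+1) (if odd m then 1 else 0 : int)%:P * 'X^(k.+1 * m)) (Ce n k * Ge n k).
Proof.
apply: eqt_subr; apply: (@eqt_cancel n k.+1) => //.
have -> : \sum_(m < n.+1) (if odd m then 1 else 0 : int)%:P * 'X^(k.+1 * m)
   = \sum_(m < n.+1) (if odd m then 1 else 0) * ('X^(k.+1)) ^+ m.
  by apply: eq_bigr => m _; rewrite exprM; case: (odd m); rewrite ?polyC1 ?polyC0.
have -> : Ge n k = \sum_(m < n.+1) ('X^(k.+1)) ^+ m.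
  by apply: eq_bigr => m _; rewrite exprM.
rewrite mulrBr geom_odd mulrA.
apply: eqt_subl.
apply: eqt_trans (_ : eqt n ('X^(k.+1) * \sum_(m < n.+1) ('X^(k.+1)) ^+ m) _); last first.
  by apply: eqtMr; apply: eqt_sym; apply: Ce_step.
move=> i hi; rewrite coefB.
case: (odd n); first by rewrite coef0 subr0.
rewrite -exprM coefXn.
have : (i != k.+1 * n.+1)%N.
  apply/eqP => h; move: hi; rewrite h mulSn => /(leq_trans (leq_addr _ _)); by rewrite ltnn.
by move/negbTE ->; rewrite subr0.
Qed.

Lemma H_eqt n j k :
  eqt n (\sum_(m < n.+1) (if (k <= j)%N ==> odd m then 1 else 0 : int)%:P * 'X^(k.+1 * m))
        ((if (k <= j)%N then Ce n k else 1) * Ge n k).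
Proof.
case: (leqP k j) => hkj /=.
  exact: odd_eqt.
rewrite mul1r /Ge; under eq_bigr => m _ do rewrite polyC1 mul1r.
exact: eqt_refl.
Qed.

Lemma Tside n :
  ((\sum_(f : fpart n | is_part f) tpart f)%N)%:Z = ((\sum_(L < n) De L) * Pe n)`_n.
Proof.
rewrite -natz natr_sum.
under eq_bigr => f _ do rewrite natz tpart_prod.
rewrite exchange_big /=.
under eq_bigr => j _ do rewrite (prod_form n (fun k m => if (k <= j)%N ==> odd m then 1 else 0)).
transitivity (\sum_(j < n) (Rq n j.+1 * Pe n)`_n).
  apply: eq_bigr => j _.
  rewrite (eqt_prod _ _ _ _ (fun k : 'I_n => (if (k <= j)%N then Ce n k else 1) * Ge n k) (fun (k : 'I_n) _ => H_eqt n j k) n (leqnn n)).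
  rewrite big_split /= /Pe.
  have -> : \prod_(k < n) (if (k <= j)%N then Ce n k else 1) = Rq n j.+1.
    rewrite /Rq (big_ord_widen _ (fun k => Ce n k) (ltn_ord j)) [RHS]big_mkcond /=.
    by apply: eq_bigr => k _; rewrite ltnS.
  by [].
rewrite -coef_sum -mulr_suml.
exact: (eqtMr _ _ _ _ (Re_De n) n (leqnn n)).
Qed.

Lemma odd_dist (a b : nat) : odd `|(a%:Z - b%:Z)|%N = odd (a + b).
Proof.
case: (leqP a b) => h.
  by rewrite distnEr // oddB // oddD addbC.
by rewrite distnEl ?oddB ?oddD // ltnW.
Qed.

Definition wS (L k m : nat) : int :=
  if (k < L)%N then (if m == 0%N then 1 else if m == 1%N then -1 else 0)
  else if k == L then (if m == 1%N then -1 else 0) else (if m == 0%N then 1 else 0).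

Lemma wS_big L k m : (1 < m)%N -> wS L k m = 0.
Proof. by case: m => [|[|m]] // _; rewrite /wS; case: ltnP; case: eqP. Qed.

Lemma sign_odd (x : nat) : (if odd x then -1 else 1 : int) = (-1) ^+ x.
Proof. by rewrite -signr_odd; case: odd. Qed.


Lemma lp_ge n (f : fpart n) k : (f k : nat) != 0%N -> (k.+1 <= largest_part f)%N.
Proof. move=> h; rewrite /largest_part.
have := @leq_bigmax_cond _ (fun i : 'I_n => (f i : nat) != 0%N) (fun i : 'I_n => (nat_of_ord i).+1) k h.
done. Qed.

Lemma lp_att n (f : fpart n) k0 : (f k0 : nat) != 0%N ->
  exists2 k, (f k : nat) != 0%N & largest_part f = k.+1.
Proof.
move=> h.
have hc : (0 < #|[pred k : 'I_n | (f k : nat) != 0%N]|)%N.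
  apply/card_gt0P; exists k0. rewrite inE. exact: h.
have [k hk e] := eq_bigmax_cond (fun k : 'I_n => (nat_of_ord k).+1) hc.
exists k; first exact: hk.
rewrite /largest_part -e; apply: eq_bigl => i; by rewrite inE.
Qed.

Lemma part_nz n (f : fpart n) : (0 < n)%N -> is_part f -> exists k, (f k : nat) != 0%N.
Proof.
move=> hn hp; case: (pickP (fun k => (f k : nat) != 0%N)) => [k hk | h]; first by exists k.
move: hp; rewrite /is_part big1.
  by move=> /eqP e; rewrite -e in hn.
move=> k _.
by move: (h k) => /negbFE /eqP ->; rewrite muln0.
Qed.

Lemma per_f n (f : fpart n) : (0 < n)%N -> is_part f ->
  \sum_(L < n) (-1) ^+ L.+1 * \prod_(k < n) wS L k (f k)
  = if distinct_parts f then (if odd `|rank f|%N then -1 else 1) else 0.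
Proof.
move=> hn hp.
case: (boolP (distinct_parts f)) => hd; last first.
  have [k hk] : exists k, ~~ ((f k : nat) <= 1)%N.
    by apply/existsP; rewrite -negb_forall.
  apply: big1 => L _; apply/eqP; rewrite mulf_eq0; apply/orP; right.
  by apply/prodf_eq0; exists k => //; rewrite wS_big // ltnNge.
have hd' : forall k, ((f k : nat) <= 1)%N by move=> k; move/forallP: hd; apply.
have [k0 hk0] := part_nz n f hn hp.
have [L0 hL0 eL0] := lp_att n f k0 hk0.
have f1 : (f L0 : nat) = 1%N.
  move: (hd' L0) hL0; case: (nat_of_ord (f L0)) => [|[|m]] //.
have f0 : forall k : 'I_n, (L0 < k)%N -> (f k : nat) = 0%N.
  move=> k hk; apply/eqP; apply: contraTT hk => h.
  by rewrite -leqNgt -ltnS -eL0 lp_ge.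
pose F L := (-1) ^+ L.+1 * \prod_(k < n) wS L k (f k).
have -> : \sum_(L < n) F L = F L0 + \sum_(L < n | L != L0) F L.
  by rewrite (bigD1 L0).
rewrite big1 ?addr0; last first.
  move=> L hL; apply/eqP; rewrite /F mulf_eq0; apply/orP; right.
  apply/prodf_eq0.
  case: (ltngtP L L0) => hLL.
  - exists L0 => //; rewrite /wS f1 ltnNge (ltnW hLL) /=.
    by rewrite (gtn_eqF hLL).
  - by exists L => //; rewrite /wS ltnn eqxx f0.
  - by case/eqP: hL; apply: val_inj.
rewrite /F.
have -> : \prod_(k < n) wS L0 k (f k) = \prod_(k < n) (-1) ^+ (f k : nat).
  apply: eq_bigr => k _; rewrite /wS.
  case: (ltngtP k L0) => hk.
  - by move: (hd' k); case: (nat_of_ord (f k)) => [|[|m]].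
  - by rewrite f0 // (gtn_eqF hk) ltnNge (ltnW hk).
  - have -> : k = L0 by apply: val_inj.
    by rewrite f1.
rewrite (prodrXr (-1) _ _ (fun k : 'I_n => nat_of_ord (f k))) -exprD -sign_odd /rank odd_dist eL0 /num_parts.
by rewrite addSn addnC.
Qed.

Lemma Sdist_sum i : Sdist i = \sum_(f : fpart i | is_part f)
   (if distinct_parts f then (if odd `|rank f|%N then -1 else 1) else 0).
Proof.
rewrite /Sdist -!sum1_card -!natz !natr_sum big_mkcond [in X in _ - X]big_mkcond.
rewrite -sumrB [RHS]big_mkcond; apply: eq_bigr => f _.
rewrite !inE.
by case: (is_part f); case: (distinct_parts f); case: odd.
Qed.

Lemma W_eval i L k : (0 < i)%N ->
  \sum_(m < i.+1) (wS L k m)%:P * 'X^(k.+1 * m)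
  = if (k < L)%N then 1 - 'X^(k.+1) else if k == L then - 'X^(k.+1) else 1.
Proof.
case: i => [|i] // _.
rewrite big_ord_recl big_ord_recl big1; last first.
  by move=> m _; rewrite wS_big ?polyC0 ?mul0r.
rewrite addr0 /= muln0 muln1 expr0 mulr1.
rewrite /wS /bump /=; case: ltnP => h1; first by rewrite polyC1 polyCN polyC1 mulN1r.
case: eqP => h2; first by rewrite polyC0 add0r polyCN polyC1 mulN1r.
by rewrite polyC0 polyC1 mul0r addr0.
Qed.

Lemma W_prod i L : (L < i)%N ->
  \prod_(k < i) (if (k < L)%N then 1 - 'X^(k.+1) else if (nat_of_ord k == L) then - 'X^(k.+1) else 1)
  = - 'X^(L.+1) * \prod_(k < L) (1 - 'X^(k.+1)) :> {poly int}.
Proof.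
move=> hL.
pose g (k : nat) : {poly int} := if (k < L)%N then 1 - 'X^(k.+1) else if k == L then - 'X^(k.+1) else 1.
transitivity (\prod_(k < i | (k < L.+1)%N) g k).
  rewrite [RHS]big_mkcond; apply: eq_bigr => k _; rewrite /g ltnS.
  case: ltngtP => //.
rewrite -big_ord_widen // big_ord_recr /= /g ltnn eqxx mulrC; congr (_ * _).
by apply: eq_bigr => k _; rewrite ltn_ord.
Qed.

Lemma Sside i : (0 < i)%N -> Sdist i = \sum_(L < i) (De L)`_i.
Proof.
move=> hi.
rewrite Sdist_sum.
transitivity (\sum_(f : fpart i | is_part f) \sum_(L < i) (-1) ^+ L.+1 * \prod_(k < i) wS L k (f k)).
  by apply: eq_bigr => f hf; rewrite (per_f i f hi hf).
rewrite exchange_big; apply: eq_bigr => L _.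
rewrite -mulr_sumr (prod_form i (fun k m => wS L k m)).
under eq_bigr => k _ do rewrite (W_eval i L k hi).
rewrite (W_prod i L (ltn_ord L)) /De -mulrA.
have -> : ((-1) ^+ L : {poly int}) = ((-1) ^+ L)%:P by rewrite rmorphXn rmorphN rmorph1.
rewrite coefCM mulNr coefN exprS; ring.
Qed.

Lemma De_low L j : (j <= L)%N -> (De L)`_j = 0.
Proof.
move=> h; have -> : De L = 'X^(L.+1) * ((-1) ^+ L * \prod_(k < L) (1 - 'X^(k.+1))).
  by rewrite /De mulrCA mulrA.
by rewrite coefXnM ltnS h.
Qed.

Lemma sumDe_trunc n i : (i <= n)%N ->
  (\sum_(L < n) De L)`_i = \sum_(L < i) (De L)`_i.
Proof.
move=> h; rewrite coef_sum (big_ord_widen _ (fun L => (De L)`_i) h) [RHS]big_mkcond.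
apply: eq_bigr => L _; case: ltnP => // hL; exact: De_low.
Qed.

Theorem theorem6 (n : nat) (hn : (1 <= n)%N) :
  ((\sum_(f : fpart n | is_part f) tpart f)%N)%:Z
  = \sum_(1 <= i < n.+1) Sdist i * (npart (n - i))%:Z.
Proof.
rewrite Tside coefM.
rewrite -(big_mkord xpredT (fun j => (\sum_(L < n) De L)`_j * (Pe n)`_(n - j))).
rewrite big_ltn // sumDe_trunc // big_ord0 mul0r add0r.
apply: eq_big_nat => i /andP [hi1 hi2].
rewrite (Sside i hi1) (npart_Pe (n - i) n (leq_subr _ _)) sumDe_trunc //.
Qed.
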